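(* Let $\mathbb{F}$ be a field with $\mathrm{Char}(\mathbb{F})=3$. Every $2$-dimensional diassociative algebra $(V,\dashv,\vdash)$ over $\mathbb{F}$ whose product $\dashv$ is not identically zero is isomorphic to one of the following dialgebras $\{A,B\}$ (for some value of the indicated parameter), and dialgebras from different items are pairwise non-isomorphic: <ol> <li>$D_{13,3}^1(\delta_1)$: $A=\begin{pmatrix}0&0&0&0\\1&0&0&0\end{pmatrix}$, $B=\begin{pmatrix}0&0&0&0\\ \delta_1&0&0&0\end{pmatrix}$, $\delta_1\in\mathbb{F}$;</li> <li>$D_{3,3}^2$: $A=B=\begin{pmatrix}1&0&0&0\\0&0&0&0\end{pmatrix}$;</li> <li>$D_{3,3}^3$: $A=\begin{pmatrix}1&0&0&0\\0&0&0&0\end{pmatrix}$, $B=\begin{pmatrix}1&0&0&0\\0&1&0&0\end{pmatrix}$;</li> <li>$D_{3,3}^4$: $A=B=\begin{pmatrix}1&0&0&0\\0&1&0&0\end{pmatrix}$;</li> <li>$D_{3,3}^5(\delta_1)$: $A=\begin{pmatrix}2&0&0&0\\0&0&2&0\end{pmatrix}$, $B=\begin{pmatrix}2&0&0&0\\ \delta_1&0&0&0\end{pmatrix}$, $\delta_1\in\mathbb{F}$;</li> <li>$D_{3,3}^6$: $A=\begin{pmatrix}2&0&0&0\\0&0&2&0\end{pmatrix}$, $B=\begin{pmatrix}2&0&0&0\\0&2&0&0\end{pmatrix}$;</li> <li>$D_{3,3}^7$: $A=B=\begin{pmatrix}2&0&0&0\\0&0&2&0\end{pmatrix}$;</li>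 <li>$D_{3,3}^8(\alpha_4)$: $A=B=\begin{pmatrix}2&0&0&\alpha_4\\0&2&2&0\end{pmatrix}$, $\alpha_4\in\mathbb{F}$.</li> </ol>
   Context: Let $\mathbb{F}$ be a field. A diassociative algebra (associative dialgebra) is a vector space $V$ over $\mathbb{F}$ with two bilinear products $\dashv,\vdash$ satisfying, for all $x,y,z\in V$: $(x\dashv y)\dashv z=x\dashv(y\dashv z)$; $x\dashv(y\dashv z)=x\dashv(y\vdash z)$; $(x\vdash y)\dashv z=x\vdash(y\dashv z)$; $(x\dashv y)\vdash z=(x\vdash y)\vdash z$; $(x\vdash y)\vdash z=x\vdash(y\vdash z)$. Two such dialgebras are isomorphic if there is an invertible linear map $f$ with $f(x\dashv y)=f(x)\dashv' f(y)$ and $f(x\vdash y)=f(x)\vdash' f(y)$ for all $x,y$. For $\dim V=2$ with fixed basis $(e_1,e_2)$, a $2\times4$ matrix $\begin{pmatrix}\alpha_1&\alpha_2&\alpha_3&\alpha_4\\ \beta_1&\beta_2&\beta_3&\beta_4\end{pmatrix}$ encodes a bilinear product $\ast$ by $e_1\ast e_1=\alpha_1e_1+\beta_1e_2$, $e_1\ast e_2=\alpha_2e_1+\beta_2e_2$, $e_2\ast e_1=\alpha_3e_1+\beta_3e_2$, $e_2\ast e_2=\alpha_4e_1+\beta_4e_2$. A pair $\{A,B\}$ denotes the dialgebra whose product $\dashv$ is encoded by $A$ and whose product $\vdash$ is encoded by $B$. *)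

(* Defs.v *)
From HB Require Import structures.
From mathcomp Require Import all_boot all_order all_algebra.
Set Implicit Arguments. Unset Strict Implicit. Unset Printing Implicit Defensive.
Import Order.TTheory GRing.Theory.
Local Open Scope ring_scope.

Section Dialg.
Variable F : fieldType.

Definition is_bilinear (V : lmodType F) (p : V -> V -> V) : Prop :=
  forall (a : F) (x y z : V),
    p (a *: x + y) z = a *: p x z + p y z /\
    p z (a *: x + y) = a *: p z x + p z y.

(** The five diassociativity axioms (dl = "-|", dr = "|-"). *)
Definition diassociative (V : lmodType F) (dl dr : V -> V -> V) : Prop :=
  forall x y z : V,
    [/\ dl (dl x y) z = dl x (dl y z),
        dl x (dl y z) = dl x (dr y z),
        dl (dr x y) z = dr x (dl y z),
        dr (dl x y) z = dr (dr x y) z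
      & dr (dr x y) z = dr x (dr y z)].

Definition dialg_iso (V W : lmodType F) (dl dr : V -> V -> V)
    (dl' dr' : W -> W -> W) : Prop :=
  exists f : V -> W,
    [/\ forall (a : F) (x y : V), f (a *: x + y) = a *: f x + f y,
        bijective f,
        forall x y, f (dl x y) = dl' (f x) (f y)
      & forall x y, f (dr x y) = dr' (f x) (f y)].

Definition i0 : 'I_2 := @Ordinal 2 0 isT.
Definition i1 : 'I_2 := @Ordinal 2 1 isT.
Definition j0 : 'I_4 := @Ordinal 4 0 isT.
Definition j1 : 'I_4 := @Ordinal 4 1 isT.
Definition j2 : 'I_4 := @Ordinal 4 2 isT.
Definition j3 : 'I_4 := @Ordinal 4 3 isT.

Definition mx24 (a1 a2 a3 a4 b1 b2 b3 b4 : F) : 'M[F]_(2,4) :=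
  \matrix_(i < 2, j < 4)
    nth 0 (if i == i0 then [:: a1; a2; a3; a4] else [:: b1; b2; b3; b4]) j.

(** The bilinear product on F^2 (row vectors, basis e1 = coordinate 0,
    e2 = coordinate 1) encoded by M:
    e1*e1 = M00 e1 + M10 e2, e1*e2 = M01 e1 + M11 e2,
    e2*e1 = M02 e1 + M12 e2, e2*e2 = M03 e1 + M13 e2. *)
Definition mprod (M : 'M[F]_(2,4)) (x y : 'rV[F]_2) : 'rV[F]_2 :=
  \row_(k < 2) (x 0 i0 * y 0 i0 * M k j0 + x 0 i0 * y 0 i1 * M k j1
              + x 0 i1 * y 0 i0 * M k j2 + x 0 i1 * y 0 i1 * M k j3).

Inductive item := D13_3_1 | D3_3_2 | D3_3_3 | D3_3_4 | D3_3_5 | D3_3_6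
                | D3_3_7 | D3_3_8.

(** The pair {A, B} of item [i] with parameter [p]
    (p = delta_1 for items 1 and 5, p = alpha_4 for item 8, ignored otherwise). *)
Definition item_pair (i : item) (p : F) : 'M[F]_(2,4) * 'M[F]_(2,4) :=
  match i with
  | D13_3_1 => (mx24 0 0 0 0 1 0 0 0, mx24 0 0 0 0 p 0 0 0)
  | D3_3_2 => (mx24 1 0 0 0 0 0 0 0, mx24 1 0 0 0 0 0 0 0)
  | D3_3_3 => (mx24 1 0 0 0 0 0 0 0, mx24 1 0 0 0 0 1 0 0)
  | D3_3_4 => (mx24 1 0 0 0 0 1 0 0, mx24 1 0 0 0 0 1 0 0)
  | D3_3_5 => (mx24 2 0 0 0 0 0 2 0, mx24 2 0 0 0 p 0 0 0)
  | D3_3_6 => (mx24 2 0 0 0 0 0 2 0, mx24 2 0 0 0 0 2 0 0)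
  | D3_3_7 => (mx24 2 0 0 0 0 0 2 0, mx24 2 0 0 0 0 0 2 0)
  | D3_3_8 => (mx24 2 0 0 p 0 2 2 0, mx24 2 0 0 p 0 2 2 0)
  end.

Definition item_dl (i : item) (p : F) := mprod (item_pair i p).1.
Definition item_dr (i : item) (p : F) := mprod (item_pair i p).2.

End Dialg.

(* Main.v *)
Require Import Defs.
From HB Require Import structures.
From mathcomp Require Import all_boot all_order all_algebra.
From mathcomp Require Import ring.
Import GRing.Theory.
Local Open Scope ring_scope.
Set Implicit Arguments. Unset Strict Implicit. Unset Printing Implicit Defensive.


Section Bil.
Variables (F : fieldType) (V : lmodType F) (p : V -> V -> V).
Hypothesis hp : is_bilinear p.
Lemma bilDl x y z : p (x + y) z = p x z + p y z.
Proof. by have [h _] := hp 1 x y z; rewrite !scale1r in h. Qed.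
Lemma bilDr x y z : p z (x + y) = p z x + p z y.
Proof. by have [_ h] := hp 1 x y z; rewrite !scale1r in h. Qed.
Lemma bil0l z : p 0 z = 0.
Proof.
have h := bilDl 0 0 z; rewrite addr0 in h.
by move/(congr1 (fun t => t - p 0 z)): h; rewrite subrr addrK.
Qed.
Lemma bil0r z : p z 0 = 0.
Proof.
have h := bilDr 0 0 z; rewrite addr0 in h.
by move/(congr1 (fun t => t - p z 0)): h; rewrite subrr addrK.
Qed.
Lemma bilZl a x z : p (a *: x) z = a *: p x z.
Proof. by have [h _] := hp a x 0 z; rewrite !addr0 bil0l addr0 in h. Qed.
Lemma bilZr a x z : p z (a *: x) = a *: p z x.
Proof. by have [_ h] := hp a x 0 z; rewrite !addr0 bil0r addr0 in h. Qed.
End Bil.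


Lemma ord2P (k : 'I_2) : k = i0 \/ k = i1.
Proof. by case: k => [[|[|k]] hk]; [left|right|]; try apply/val_inj. Qed.

Section Basis.
Variables (F : fieldType) (V : lmodType F).
Variables (u w : V) (c1 c2 : V -> F).
Hypothesis span : forall v, v = c1 v *: u + c2 v *: w.
Hypothesis indep : forall a b, a *: u + b *: w = 0 -> a = 0 /\ b = 0.

Definition gb (x : 'rV[F]_2) := x 0 i0 *: u + x 0 i1 *: w.

Lemma combE k l p q r s : k *: (p *: u + q *: w) + l *: (r *: u + s *: w)
   = (k * p + l * r) *: u + (k * q + l * s) *: w.
Proof. by rewrite !scalerDr !scalerA !scalerDl addrACA. Qed.

Definition tab (p : V -> V -> V) (T : 'M[F]_(2,4)) :=
  [/\ p u u = T i0 j0 *: u + T i1 j0 *: w, p u w = T i0 j1 *: u + T i1 j1 *: w,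
      p w u = T i0 j2 *: u + T i1 j2 *: w & p w w = T i0 j3 *: u + T i1 j3 *: w].

Lemma prod_gb p T : is_bilinear p -> tab p T ->
  forall x y, gb (mprod T x y) = p (gb x) (gb y).
Proof.
move=> hp [h1 h2 h3 h4] x y.
rewrite /gb (bilDl hp) !(bilZl hp) !(bilDr hp) !(bilZr hp) h1 h2 h3 h4 !combE.
by rewrite !mxE; congr (_ *: _ + _ *: _); ring.
Qed.

Lemma gb_inj x y : gb x = gb y -> x = y.
Proof.
move=> /eqP; rewrite -subr_eq0 /gb opprD addrACA -!scalerBl => /eqP /indep [h1 h2].
apply/rowP => k; apply/eqP; rewrite -subr_eq0.
by case: (ord2P k) => ->; apply/eqP.
Qed.

Definition hb (v : V) : 'rV[F]_2 := \row_(k < 2) (if k == i0 then c1 v else c2 v).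

Lemma gbK : cancel hb gb.
Proof. by move=> v; rewrite /gb !mxE /= -span. Qed.

Lemma hbK : cancel gb hb.
Proof. by move=> x; apply: gb_inj; rewrite gbK. Qed.

Lemma gb_lin a x y : gb (a *: x + y) = a *: gb x + gb y.
Proof.
rewrite /gb !mxE !scalerDl -!scalerA !scalerDr.
by rewrite addrACA.
Qed.

Lemma basis_iso (dl dr : V -> V -> V) T S :
  is_bilinear dl -> is_bilinear dr -> tab dl T -> tab dr S ->
  dialg_iso (mprod T) (mprod S) dl dr.
Proof.
move=> hl hr tl tr; exists gb; split.
- exact: gb_lin.
- exact: (Bijective hbK gbK).
- exact: prod_gb.
- exact: prod_gb.
Qed.
End Basis.

Section Iso.
Variables (F : fieldType).
Lemma iso_sym (V W : lmodType F) (dl dr : V -> V -> V) (dl' dr' : W -> W -> W) :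
  dialg_iso dl dr dl' dr' -> dialg_iso dl' dr' dl dr.
Proof.
case=> f [fl [g fg gf] pl pr]; exists g; split.
- move=> a x y; apply: (can_inj fg); by rewrite fl !gf.
- exact: (Bijective gf fg).
- by move=> x y; apply: (can_inj fg); rewrite pl !gf.
- by move=> x y; apply: (can_inj fg); rewrite pr !gf.
Qed.

Lemma iso_trans (U V W : lmodType F) (dl dr : U -> U -> U) (dl' dr' : V -> V -> V)
  (dl'' dr'' : W -> W -> W) :
  dialg_iso dl dr dl' dr' -> dialg_iso dl' dr' dl'' dr'' -> dialg_iso dl dr dl'' dr''.
Proof.
case=> f [fl fb pl pr]; case=> g [gl gb' ql qr]; exists (g \o f); split.
- by move=> a x y /=; rewrite fl gl.
- exact: bij_comp.
- by move=> x y /=; rewrite pl ql.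
- by move=> x y /=; rewrite pr qr.
Qed.

Lemma iso_diassoc (V W : lmodType F) (dl dr : V -> V -> V) (dl' dr' : W -> W -> W) :
  dialg_iso dl dr dl' dr' -> diassociative dl' dr' -> diassociative dl dr.
Proof.
case=> f [fl [g fg gf] pl pr] H x y z.
have fi := can_inj fg.
have [h1 h2 h3 h4 h5] := H (f x) (f y) (f z).
by split; apply: fi; rewrite !(pl, pr).
Qed.

Lemma iso_nz (V W : lmodType F) (dl dr : V -> V -> V) (dl' dr' : W -> W -> W) :
  dialg_iso dl dr dl' dr' -> (exists x y, dl' x y != 0) -> exists x y, dl x y != 0.
Proof.
case=> f [fl [g fg gf] pl pr] [x [y h]]; exists (g x), (g y).
apply: contra h => /eqP h; rewrite -(gf x) -(gf y) -pl h.
have := fl 1 0 0; rewrite !scale1r !addr0 => e.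
by apply/eqP; move/(congr1 (fun t => t - f 0)): e; rewrite subrr addrK.
Qed.
End Iso.


Section Ctab.
Variables (F : fieldType) (V : lmodType F).
Variables (u w : V) (c1 c2 : V -> F).
Hypothesis span : forall v, v = c1 v *: u + c2 v *: w.
Definition ctab (p : V -> V -> V) : 'M[F]_(2,4) :=
  mx24 (c1 (p u u)) (c1 (p u w)) (c1 (p w u)) (c1 (p w w))
       (c2 (p u u)) (c2 (p u w)) (c2 (p w u)) (c2 (p w w)).
Lemma ctabP p : tab u w p (ctab p).
Proof. by rewrite /tab /ctab !mxE /=; split; apply: span. Qed.
End Ctab.

Section Rv.
Variable F : fieldType.
Definition vec2 (c d : F) : 'rV[F]_2 := \row_(k < 2) (if k == i0 then c else d).

Lemma row2_eq (x y : 'rV[F]_2) : x 0 i0 = y 0 i0 -> x 0 i1 = y 0 i1 -> x = y.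
Proof. by move=> h0 h1; apply/rowP => k; case: (ord2P k) => ->. Qed.

Lemma mprod_bil (M : 'M[F]_(2,4)) : is_bilinear (mprod M).
Proof.
by move=> a x y z; split; apply: row2_eq; rewrite !mxE; ring.
Qed.

Variables (u w : 'rV[F]_2).
Definition dt := u 0 i0 * w 0 i1 - u 0 i1 * w 0 i0.
Definition cr1 (v : 'rV[F]_2) := (v 0 i0 * w 0 i1 - v 0 i1 * w 0 i0) / dt.
Definition cr2 (v : 'rV[F]_2) := (u 0 i0 * v 0 i1 - u 0 i1 * v 0 i0) / dt.
Hypothesis hdt : dt != 0.
Lemma cr_span v : v = cr1 v *: u + cr2 v *: w.
Proof.
apply: row2_eq; rewrite !mxE /cr1 /cr2; move: hdt; rewrite /dt => h; field => //.
Qed.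
Lemma cr_indep a b : a *: u + b *: w = 0 -> a = 0 /\ b = 0.
Proof.
move=> h.
have h0 := congr1 (fun v : 'rV[F]_2 => v 0 i0) h.
have h1 := congr1 (fun v : 'rV[F]_2 => v 0 i1) h.
rewrite /= !mxE in h0 h1.
have ea : a * dt = w 0 i1 * (a * u 0 i0 + b * w 0 i0) - w 0 i0 * (a * u 0 i1 + b * w 0 i1)
  by rewrite /dt; ring.
have eb : b * dt = u 0 i0 * (a * u 0 i1 + b * w 0 i1) - u 0 i1 * (a * u 0 i0 + b * w 0 i0)
  by rewrite /dt; ring.
rewrite h0 h1 !mulr0 subrr in ea eb.
move/eqP: ea; rewrite mulf_eq0 (negPf hdt) orbF => /eqP ->.
by move/eqP: eb; rewrite mulf_eq0 (negPf hdt) orbF => /eqP ->.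
Qed.

Lemma transport (A B T : 'M[F]_(2,4)) : tab u w (mprod A) T ->
  dialg_iso (mprod T) (mprod (ctab u w cr1 cr2 (mprod B))) (mprod A) (mprod B).
Proof.
move=> hT; apply: (basis_iso cr_span cr_indep) => //; try apply: mprod_bil.
exact: ctabP cr_span _.
Qed.
End Rv.


Section St2.
Variable F : fieldType.
Hypothesis hF : (3 \in [pchar F])%N.

Lemma three0 : (3 : F) = 0.
Proof. by move: hF => /andP [_ /eqP]. Qed.
Lemma two_m1 : (2 : F) = -1.
Proof.
apply/eqP; rewrite -subr_eq0 opprK; have -> : (2:F) + 1 = 3 by ring.
by rewrite three0.
Qed.
Lemma two_nz : (2 : F) != 0.
Proof. by rewrite two_m1 oppr_eq0 oner_eq0. Qed.

Lemma esolve (x e L R k : F) : L = R -> L - R = k * (x - e) -> k != 0 -> x = e.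
Proof.
move=> -> h hk; apply/eqP; rewrite -subr_eq0; apply/eqP.
by apply: (mulfI hk); rewrite mulr0 -h subrr.
Qed.
Lemma ezero (P L R : F) : L = R -> L - R = P -> P = 0.
Proof. by move=> -> <-; rewrite subrr. Qed.

Lemma iso_refl (V : lmodType F) (dl dr : V -> V -> V) : dialg_iso dl dr dl dr.
Proof. by exists id; split => //; exists id. Qed.

Section Ax.
Variables (V : lmodType F) (dl dr : V -> V -> V).
Hypothesis H : diassociative dl dr.
Lemma ax1 x y z : dl (dl x y) z = dl x (dl y z). Proof. by case: (H x y z). Qed.
Lemma ax2 x y z : dl x (dl y z) = dl x (dr y z). Proof. by case: (H x y z). Qed.
Lemma ax3 x y z : dl (dr x y) z = dr x (dl y z). Proof. by case: (H x y z). Qed.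
Lemma ax4 x y z : dr (dl x y) z = dr (dr x y) z. Proof. by case: (H x y z). Qed.
Lemma ax5 x y z : dr (dr x y) z = dr x (dr y z). Proof. by case: (H x y z). Qed.
End Ax.

Definition e1 : 'rV[F]_2 := vec2 1 0.
Definition e2 : 'rV[F]_2 := vec2 0 1.

End St2.

Ltac solve_lin h :=
  first [ apply: (esolve (k:=1) h); [by ring | exact: oner_neq0]
        | apply: (esolve (k:=-1) h); [by ring | by rewrite oppr_eq0 oner_eq0]
        | apply: (esolve (k:=2) h); [by ring | by apply: two_nz; assumption]
        | apply: (esolve (k:=-2) h); [by ring | by rewrite oppr_eq0; apply: two_nz; assumption] ].

Ltac getc E x y z c h :=
  have h := congr1 (fun v : 'M[_]_(1,2) => v 0 c) (E x y z); rewrite /= !mxE /= in h.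

Ltac dvn E x y z c t hn :=
  let h := fresh "h" in getc E x y z c h; have hn : t by solve_lin h; clear h.
Lemma sq0 (F : fieldType) (x : F) : x * x = 0 -> x = 0.
Proof. by move/eqP; rewrite mulf_eq0 orbb => /eqP. Qed.
Ltac dv E x y z c t :=
  let h := fresh "h" in getc E x y z c h; have ? : t by solve_lin h; clear h.

Section N.
Variable F : fieldType.
Hypothesis hF : (3 \in [pchar F])%N.
Lemma stage2N (c1 c2 c3 c4 d1 d2 d3 d4 : F) :
  diassociative (mprod (mx24 0 0 0 0 1 0 0 0)) (mprod (mx24 c1 c2 c3 c4 d1 d2 d3 d4)) ->
  exists i p, dialg_iso (item_dl i p) (item_dr i p)
     (mprod (mx24 0 0 0 0 1 0 0 0)) (mprod (mx24 c1 c2 c3 c4 d1 d2 d3 d4)).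
Proof.
move=> H.
pose E1 := e1 F; pose E2 := e2 F.
dv (ax2 H) E1 E1 E1 i1 (c1 = 0).
dv (ax3 H) E1 E1 E1 i0 (c2 = 0).
dv (ax2 H) E1 E2 E1 i1 (c3 = 0).
dv (ax2 H) E1 E2 E2 i1 (c4 = 0). subst.
dv (ax3 H) E1 E1 E1 i1 (d2 = 0).
dv (ax3 H) E2 E1 E1 i1 (d4 = 0). subst.
dvn (ax4 H) E2 E1 E1 i1 (d3 * d3 = 0) hq; move/sq0: hq => ?; subst.
by exists D13_3_1, d1; apply: iso_refl.
Qed.
End N.

Lemma mul_case (F : fieldType) (x y : F) : x * y = 0 -> x = 0 \/ y = 0.
Proof. by move/eqP; rewrite mulf_eq0 => /orP [] /eqP; [left|right]. Qed.
Lemma subeq (F : fieldType) (x y : F) : x - y = 0 -> x = y.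
Proof. by move/eqP; rewrite subr_eq0 => /eqP. Qed.

Section St2b.
Variable F : fieldType.
Hypothesis hF : (3 \in [pchar F])%N.
Lemma stage2E (c1 c2 c3 c4 d1 d2 d3 d4 : F) :
  diassociative (mprod (mx24 1 0 0 0 0 0 0 0)) (mprod (mx24 c1 c2 c3 c4 d1 d2 d3 d4)) ->
  exists i p, dialg_iso (item_dl i p) (item_dr i p)
     (mprod (mx24 1 0 0 0 0 0 0 0)) (mprod (mx24 c1 c2 c3 c4 d1 d2 d3 d4)).
Proof.
move=> H; pose E1 := e1 F; pose E2 := e2 F.
dv (ax2 H) E1 E1 E1 i0 (c1 = 1).
dv (ax2 H) E1 E1 E2 i0 (c2 = 0).
dv (ax2 H) E1 E2 E1 i0 (c3 = 0).
dv (ax2 H) E1 E2 E2 i0 (c4 = 0).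
dv (ax3 H) E1 E1 E1 i1 (d1 = 0).
dv (ax3 H) E2 E1 E1 i1 (d3 = 0). subst.
dvn (ax4 H) E2 E2 E2 i1 (d4 * d4 = 0) hq; move/sq0: hq => ?; subst.
dvn (ax5 H) E1 E1 E2 i1 (d2 * (1 - d2) = 0) hq.
case/mul_case: hq => [|/subeq] ?; subst.
- by exists D3_3_2, 0; apply: iso_refl.
- by exists D3_3_3, 0; apply: iso_refl.
Qed.

Lemma stage2L (c1 c2 c3 c4 d1 d2 d3 d4 : F) :
  diassociative (mprod (mx24 1 0 0 0 0 1 0 0)) (mprod (mx24 c1 c2 c3 c4 d1 d2 d3 d4)) ->
  exists i p, dialg_iso (item_dl i p) (item_dr i p)
     (mprod (mx24 1 0 0 0 0 1 0 0)) (mprod (mx24 c1 c2 c3 c4 d1 d2 d3 d4)).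
Proof.
move=> H; pose E1 := e1 F; pose E2 := e2 F.
dv (ax2 H) E1 E1 E1 i0 (c1 = 1).
dv (ax2 H) E1 E1 E1 i1 (d1 = 0).
dv (ax2 H) E1 E1 E2 i0 (c2 = 0).
dv (ax2 H) E1 E1 E2 i1 (d2 = 1).
dv (ax2 H) E1 E2 E1 i0 (c3 = 0).
dv (ax2 H) E1 E2 E1 i1 (d3 = 0).
dv (ax2 H) E1 E2 E2 i0 (c4 = 0).
dv (ax2 H) E1 E2 E2 i1 (d4 = 0). subst.
by exists D3_3_4, 0; apply: iso_refl.
Qed.

Lemma stage2U (al c1 c2 c3 c4 d1 d2 d3 d4 : F) :
  diassociative (mprod (mx24 2 0 0 al 0 2 2 0)) (mprod (mx24 c1 c2 c3 c4 d1 d2 d3 d4)) ->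
  exists i p, dialg_iso (item_dl i p) (item_dr i p)
     (mprod (mx24 2 0 0 al 0 2 2 0)) (mprod (mx24 c1 c2 c3 c4 d1 d2 d3 d4)).
Proof.
move=> H; pose E1 := e1 F; pose E2 := e2 F.
dv (ax2 H) E1 E1 E1 i0 (c1 = 2).
dv (ax2 H) E1 E1 E1 i1 (d1 = 0).
dv (ax2 H) E1 E1 E2 i0 (c2 = 0).
dv (ax2 H) E1 E1 E2 i1 (d2 = 2).
dv (ax2 H) E1 E2 E1 i0 (c3 = 0).
dv (ax2 H) E1 E2 E1 i1 (d3 = 2).
dv (ax2 H) E1 E2 E2 i0 (c4 = al).
dv (ax2 H) E1 E2 E2 i1 (d4 = 0). subst.
by exists D3_3_8, al; apply: iso_refl.
Qed.

Lemma stage2R (c1 c2 c3 c4 d1 d2 d3 d4 : F) :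
  diassociative (mprod (mx24 2 0 0 0 0 0 2 0)) (mprod (mx24 c1 c2 c3 c4 d1 d2 d3 d4)) ->
  exists i p, dialg_iso (item_dl i p) (item_dr i p)
     (mprod (mx24 2 0 0 0 0 0 2 0)) (mprod (mx24 c1 c2 c3 c4 d1 d2 d3 d4)).
Proof.
move=> H; pose E1 := e1 F; pose E2 := e2 F.
dv (ax2 H) E1 E1 E1 i0 (c1 = 2).
dv (ax2 H) E1 E1 E2 i0 (c2 = 0).
dv (ax2 H) E1 E2 E1 i0 (c3 = 0).
dv (ax2 H) E1 E2 E2 i0 (c4 = 0). subst.
dvn (ax4 H) E2 E2 E2 i1 (d4 * d4 = 0) hq; move/sq0: hq => ?; subst.
dvn (ax4 H) E2 E1 E1 i1 (d3 * (2 - d3) = 0) q1.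
dvn (ax4 H) E1 E2 E1 i1 (d2 * d3 = 0) q2.
dvn (ax4 H) E1 E1 E1 i1 (d1 * d3 = 0) q3.
dvn (ax5 H) E1 E1 E2 i1 (d2 * (2 - d2) = 0) q4.
case/mul_case: q1 => [|/subeq] ?; subst.
- case/mul_case: q4 => [|/subeq] ?; subst.
  + by exists D3_3_5, d1; apply: iso_refl.
  + dvn (ax5 H) E1 E1 E1 i1 (d1 * 2 = 0) q5.
    have ? : d1 = 0.
      by case/mul_case: q5 => // /eqP; rewrite (negPf (two_nz hF)).
    subst; by exists D3_3_6, 0; apply: iso_refl.
- have ? : d2 = 0 by case/mul_case: q2 => // /eqP; rewrite (negPf (two_nz hF)).
  have ? : d1 = 0 by case/mul_case: q3 => // /eqP; rewrite (negPf (two_nz hF)).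
  subst; by exists D3_3_7, 0; apply: iso_refl.
Qed.
End St2b.


Ltac fld := field; try (repeat (apply/andP; split)); try assumption.

Section Good.
Variable F : fieldType.
Hypothesis hF : (3 \in [pchar F])%N.

Definition good (T : 'M[F]_(2,4)) := forall S : 'M[F]_(2,4),
  diassociative (mprod T) (mprod S) ->
  exists i p, dialg_iso (item_dl i p) (item_dr i p) (mprod T) (mprod S).

Lemma mx24_eta (S : 'M[F]_(2,4)) : S = mx24 (S i0 j0) (S i0 j1) (S i0 j2) (S i0 j3)
   (S i1 j0) (S i1 j1) (S i1 j2) (S i1 j3).
Proof.
apply/matrixP => i j; rewrite !mxE; case: (ord2P i) => ->;
by case: j => [[|[|[|[|j]]]] hj] //=; congr (S _ _); apply/val_inj.
Qed.

Lemma goodN : good (mx24 0 0 0 0 1 0 0 0).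
Proof. by move=> S; rewrite (mx24_eta S); apply: stage2N. Qed.
Lemma goodE : good (mx24 1 0 0 0 0 0 0 0).
Proof. by move=> S; rewrite (mx24_eta S); apply: stage2E. Qed.
Lemma goodL : good (mx24 1 0 0 0 0 1 0 0).
Proof. by move=> S; rewrite (mx24_eta S); apply: stage2L. Qed.
Lemma goodR : good (mx24 2 0 0 0 0 0 2 0).
Proof. by move=> S; rewrite (mx24_eta S); apply: (stage2R hF). Qed.
Lemma goodU al : good (mx24 2 0 0 al 0 2 2 0).
Proof. by move=> S; rewrite (mx24_eta S); apply: (stage2U hF). Qed.

Lemma good_trans (T T' : 'M[F]_(2,4)) (u w : 'rV[F]_2) :
  dt u w != 0 -> tab u w (mprod T) T' -> good T' -> good T.
Proof.
move=> hd ht g S HS.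
have I := transport hd S ht.
have [i [p Ip]] := g _ (iso_diassoc I HS).
by exists i, p; apply: iso_trans Ip I.
Qed.

Lemma goodLt (b2 a3 : F) : (b2 != 0) || (a3 != 0) ->
  good (mx24 b2 0 a3 0 0 b2 0 a3).
Proof.
case/orP => h.
- apply: (@good_trans _ _ (vec2 b2^-1 0) (vec2 a3 (- b2))); last exact: goodL.
  + by rewrite /dt !mxE /=; rewrite mul0r subr0 mulrN mulVf // oppr_eq0 oner_eq0.
  + by split; apply: row2_eq; rewrite !mxE /=; field.
- apply: (@good_trans _ _ (vec2 0 a3^-1) (vec2 a3 (- b2))); last exact: goodL.
  + by rewrite /dt !mxE /= mul0r sub0r mulVf // oppr_eq0 oner_eq0.
  + by split; apply: row2_eq; rewrite !mxE /=; field.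
Qed.

Lemma goodRt (b3 a2 : F) : (b3 != 0) || (a2 != 0) ->
  good (mx24 b3 a2 0 0 0 0 b3 a2).
Proof.
have h2 := two_nz hF.
case/orP => h.
- apply: (@good_trans _ _ (vec2 (2 / b3) 0) (vec2 a2 (- b3))); last exact: goodR.
  + have -> : dt (vec2 (2 / b3) 0) (vec2 a2 (- b3)) = - 2 by rewrite /dt !mxE /=; field.
    by rewrite oppr_eq0.
  + by split; apply: row2_eq; rewrite !mxE /=; field.
- apply: (@good_trans _ _ (vec2 0 (2 / a2)) (vec2 a2 (- b3))); last exact: goodR.
  + have -> : dt (vec2 0 (2 / a2)) (vec2 a2 (- b3)) = - 2 by rewrite /dt !mxE /=; field.
    by rewrite oppr_eq0.
  + by split; apply: row2_eq; rewrite !mxE /=; field.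
Qed.

Lemma goodT (a b : F) : good (mx24 0 a a (a * b) 1 b b (a + b ^+ 2)).
Proof.
have h2 := two_nz hF.
have [a0|ha] := eqVneq a 0.
  subst a; have [b0|hb] := eqVneq b 0.
    subst b; rewrite mul0r add0r expr2 mul0r; exact: goodN.
  apply: (@good_trans _ _ (vec2 0 (b ^- 2)) (vec2 1 (- b^-1))); last exact: goodE.
  + have -> : dt (vec2 0 (b ^- 2)) (vec2 1 (- b^-1)) = - b ^- 2.
      by rewrite /dt !mxE /=; fld.
    by rewrite oppr_eq0 invr_eq0 expf_neq0.
  + by split; apply: row2_eq; rewrite !mxE /=; fld.
apply: (@good_trans _ (mx24 2 0 0 ((a + b ^+ 2 / 4) / 2) 0 2 2 0) (vec2 (- 2 * b / a) (2 / a))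
          (vec2 (1 + b ^+ 2 / (2 * a)) (- b / (2 * a))));
  last exact: goodU.
+ have -> : dt (vec2 (- 2 * b / a) (2 / a)) (vec2 (1 + b ^+ 2 / (2 * a)) (- b / (2 * a)))
      = - 2 / a.
    by rewrite /dt !mxE /=; fld.
  by rewrite mulf_neq0 // ?oppr_eq0 ?invr_eq0.
+ have h4 : (4 : F) != 0.
    have -> : (4 : F) = 2 * 2 by ring.
    by rewrite mulf_neq0.
  by split; apply: row2_eq; rewrite !mxE /=; fld.
Qed.
End Good.

Section CaseI.
Variable F : fieldType.
Hypothesis hF : (3 \in [pchar F])%N.

Lemma caseI (A : 'M[F]_(2,4)) (x : 'rV[F]_2) :
  dt x (mprod A x x) != 0 -> good A.
Proof.
move=> hd S HS.
pose y := mprod A x x.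
pose z := mprod A x y.
pose a := cr1 x y z; pose b := cr2 x y z.
have ez : z = a *: x + b *: y := cr_span hd z.
have hb := mprod_bil A.
have ht : tab x y (mprod A) (mx24 0 a a (a * b) 1 b b (a + b ^+ 2)).
  rewrite /tab !mxE /=; split.
  - by rewrite scale0r add0r scale1r.
  - exact: ez.
  - by rewrite /y (ax1 HS) -/y -/z.
  - rewrite {1}/y (ax1 HS) -/y -/z ez (bilDr hb) !(bilZr hb) -/y -/z ez.
    by apply: row2_eq; rewrite !mxE; ring.
move: S HS; apply: (good_trans hd ht); by apply: goodT.
Qed.
End CaseI.

Lemma comb (F : fieldType) (p q r : F) : p = 0 -> q = 0 -> r = p + q -> r = 0.
Proof. by move=> -> -> ->; rewrite addr0. Qed.
Lemma comb2 (F : fieldType) (p q r : F) : p = 0 -> q = 0 -> r = p - q -> r = 0.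
Proof. by move=> -> -> ->; rewrite subr0. Qed.

Section Stage1.
Variable F : fieldType.
Hypothesis hF : (3 \in [pchar F])%N.

Lemma two_mul0 (x : F) : 2 * x = 0 -> x = 0.
Proof. by case/mul_case => // /eqP; rewrite (negPf (two_nz hF)). Qed.

Lemma stage1 (a1 a2 a3 a4 b1 b2 b3 b4 : F) :
  (exists x y, mprod (mx24 a1 a2 a3 a4 b1 b2 b3 b4) x y != 0) ->
  good (mx24 a1 a2 a3 a4 b1 b2 b3 b4).
Proof.
move=> hnz S HS.
pose E1 := e1 F; pose E2 := e2 F.
have [h1|h1] := eqVneq (dt E1 (mprod (mx24 a1 a2 a3 a4 b1 b2 b3 b4) E1 E1)) 0;
  last by move: S HS; apply: (caseI hF h1).
have [h2|h2] := eqVneq (dt E2 (mprod (mx24 a1 a2 a3 a4 b1 b2 b3 b4) E2 E2)) 0;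
  last by move: S HS; apply: (caseI hF h2).
have [h3|h3] := eqVneq (dt (vec2 1 1) (mprod (mx24 a1 a2 a3 a4 b1 b2 b3 b4) (vec2 1 1) (vec2 1 1))) 0;
  last by move: S HS; apply: (caseI hF h3).
have [h4|h4] := eqVneq (dt (vec2 1 (-1)) (mprod (mx24 a1 a2 a3 a4 b1 b2 b3 b4) (vec2 1 (-1)) (vec2 1 (-1)))) 0;
  last by move: S HS; apply: (caseI hF h4).
rewrite /dt !mxE /= in h1 h2 h3 h4.
have ? : b1 = 0 by solve_lin h1.
have ? : a4 = 0 by solve_lin h2. subst.
have m1 : b4 - a2 - a3 + (b2 + b3 - a1) = 0 by solve_lin h3.
have m2 : b4 - a2 - a3 - (b2 + b3 - a1) = 0 by solve_lin h4.
have ? : b4 = a2 + a3.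
  apply: subeq; apply: two_mul0; apply: (comb m1 m2); ring.
have ? : a1 = b2 + b3.
  apply: subeq; apply: two_mul0; apply: (comb2 m2 m1); ring.
subst; clear h1 h2 h3 h4 m1 m2.
dvn (ax1 HS) E1 E1 E2 i0 (a2 * b2 = 0) q1.
dvn (ax1 HS) E1 E1 E2 i1 (b2 * b3 = 0) q2.
dvn (ax1 HS) E2 E1 E1 i0 (a3 * b3 = 0) q3.
dvn (ax1 HS) E1 E2 E2 i0 (a2 * a3 = 0) q4.
move: S HS.
have [?|ha2] := eqVneq a2 0.
- subst; have [?|hb3] := eqVneq b3 0.
  + subst; rewrite addr0 add0r; apply: goodLt.
    apply/orP; have [b0|hb] := eqVneq b2 0; last by left.
    have [a0|ha] := eqVneq a3 0; last by right.
    subst; exfalso; case: hnz => x [y] /eqP H; apply: H.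
    by apply: row2_eq; rewrite !mxE /=; ring.
  + have ? : b2 = 0 by case/mul_case: q2 => // /eqP; rewrite (negPf hb3).
    have ? : a3 = 0 by case/mul_case: q3 => // /eqP; rewrite (negPf hb3).
    subst; rewrite !add0r; apply: (goodRt hF (a2 := 0)).
    by rewrite hb3.
- have ? : b2 = 0 by case/mul_case: q1 => // /eqP; rewrite (negPf ha2).
  have ? : a3 = 0 by case/mul_case: q4 => // /eqP; rewrite (negPf ha2).
  subst; rewrite add0r addr0; apply: (goodRt hF).
  by rewrite ha2 orbT.
Qed.
End Stage1.


Section Inv.
Variable F : fieldType.
Section G.
Variables (V : lmodType F) (dl dr : V -> V -> V).
Definition P1 := forall x y, dl x y = dr x y.
Definition P2 := forall x y z, dl (dl x y) z = 0.
Definition P3 := forall x y, dl x y = dl y x.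
Definition P4 := forall x y, dr x y = dr y x.
Definition P5 := exists u, forall x, dl u x = x.
End G.

Section Tr.
Variables (V W : lmodType F) (dl dr : V -> V -> V) (dl' dr' : W -> W -> W).
Hypothesis I : dialg_iso dl dr dl' dr'.
Lemma P1_tr : P1 dl dr -> P1 dl' dr'.
Proof.
case: I => f [fl [g fg gf] pl pr] H x y.
by rewrite -(gf x) -(gf y) -pl -pr H.
Qed.
Lemma P2_tr : P2 dl -> P2 dl'.
Proof.
case: I => f [fl [g fg gf] pl pr] H x y z.
rewrite -(gf x) -(gf y) -(gf z) -!pl H.
have := fl 1 0 0; rewrite !scale1r !addr0 => e.
by move/(congr1 (fun t => t - f 0)): e; rewrite subrr addrK.
Qed.
Lemma P3_tr : P3 dl -> P3 dl'.
Proof.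
case: I => f [fl [g fg gf] pl pr] H x y.
by rewrite -(gf x) -(gf y) -!pl H.
Qed.
Lemma P4_tr : P4 dr -> P4 dr'.
Proof.
case: I => f [fl [g fg gf] pl pr] H x y.
by rewrite -(gf x) -(gf y) -!pr H.
Qed.
Lemma P5_tr : P5 dl -> P5 dl'.
Proof.
case: I => f [fl [g fg gf] pl pr] [u H]; exists (f u) => x.
by rewrite -(gf x) -pl H.
Qed.
End Tr.

Lemma Piff (V W : lmodType F) (dl dr : V -> V -> V) (dl' dr' : W -> W -> W) :
  dialg_iso dl dr dl' dr' ->
  [/\ P1 dl dr <-> P1 dl' dr', P2 dl <-> P2 dl', P3 dl <-> P3 dl',
      P4 dr <-> P4 dr' & P5 dl <-> P5 dl'].
Proof.
move=> I; have J := iso_sym I.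
split; split; [exact: P1_tr I|exact: P1_tr J|exact: P2_tr I|exact: P2_tr J
  |exact: P3_tr I|exact: P3_tr J|exact: P4_tr I|exact: P4_tr J
  |exact: P5_tr I|exact: P5_tr J].
Qed.
End Inv.

Lemma cnum (F : fieldType) (L R k : F) : L = R -> L - R = k -> k != 0 -> False.
Proof. by move=> -> <-; rewrite subrr eqxx. Qed.

Section Facts.
Variable F : fieldType.
Hypothesis hF : (3 \in [pchar F])%N.
Lemma four_nz : (4 : F) != 0.
Proof. have -> : (4 : F) = 2 * 2 by ring. by rewrite mulf_neq0 // two_nz. Qed.

Ltac cn h :=
  first [ apply: (cnum (k := 1) h); [by ring | exact: oner_neq0]
        | apply: (cnum (k := -1) h); [by ring | by rewrite oppr_eq0 oner_eq0]
        | apply: (cnum (k := 2) h); [by ring | exact: two_nz]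
        | apply: (cnum (k := -2) h); [by ring | by rewrite oppr_eq0 two_nz]
        | apply: (cnum (k := 4) h); [by ring | exact: four_nz]
        | apply: (cnum (k := -4) h); [by ring | by rewrite oppr_eq0 four_nz] ].

Definition Fact (i : item) (p : F) : Prop :=
  let dl := item_dl i p in let dr := item_dr i p in
  match i with
  | D13_3_1 => P2 dl
  | D3_3_2 => P1 dl dr /\ ~ P2 dl /\ P3 dl /\ ~ P5 dl
  | D3_3_3 => ~ P1 dl dr /\ ~ P2 dl /\ P3 dl
  | D3_3_4 => P1 dl dr /\ ~ P2 dl /\ ~ P3 dl /\ P5 dl
  | D3_3_5 => ~ P1 dl dr /\ ~ P2 dl /\ ~ P3 dl /\ P4 dr
  | D3_3_6 => ~ P1 dl dr /\ ~ P2 dl /\ ~ P3 dl /\ ~ P4 dr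
  | D3_3_7 => P1 dl dr /\ ~ P2 dl /\ ~ P3 dl /\ ~ P5 dl
  | D3_3_8 => P1 dl dr /\ ~ P2 dl /\ P3 dl /\ P5 dl
  end.

Ltac cg H c h := have h := congr1 (fun v : 'M[_]_(1,2) => v 0 c) H; rewrite !mxE /= in h.

Lemma facts i p : Fact i p.
Proof.
pose E1 := e1 F; pose E2 := e2 F.
have h2 := two_m1 hF.
case: i; rewrite /Fact.
- by move=> x y z; apply: row2_eq; rewrite !mxE /=; ring.
- split; [|split; [|split]].
  + by [].
  + by move=> H; cg (H E1 E1 E1) i0 h; cn h.
  + by move=> x y; apply: row2_eq; rewrite !mxE /=; ring.
  + by case=> u H; cg (H E2) i1 h; cn h.
- split; [|split].
  + by move=> H; cg (H E1 E2) i1 h; cn h.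
  + by move=> H; cg (H E1 E1 E1) i0 h; cn h.
  + by move=> x y; apply: row2_eq; rewrite !mxE /=; ring.
- split; [|split; [|split]].
  + by [].
  + by move=> H; cg (H E1 E1 E1) i0 h; cn h.
  + by move=> H; cg (H E1 E2) i1 h; cn h.
  + by exists E1 => x; apply: row2_eq; rewrite !mxE /=; ring.
- split; [|split; [|split]].
  + by move=> H; cg (H E2 E1) i1 h; cn h.
  + by move=> H; cg (H E1 E1 E1) i0 h; cn h.
  + by move=> H; cg (H E1 E2) i1 h; cn h.
  + by move=> x y; apply: row2_eq; rewrite !mxE /=; ring.
- split; [|split; [|split]].
  + by move=> H; cg (H E2 E1) i1 h; cn h.
  + by move=> H; cg (H E1 E1 E1) i0 h; cn h.
  + by move=> H; cg (H E1 E2) i1 h; cn h.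
  + by move=> H; cg (H E1 E2) i1 h; cn h.
- split; [|split; [|split]].
  + by [].
  + by move=> H; cg (H E1 E1 E1) i0 h; cn h.
  + by move=> H; cg (H E1 E2) i1 h; cn h.
  + by case=> u H; cg (H E2) i1 h; cn h.
- split; [|split; [|split]].
  + by [].
  + by move=> H; cg (H E1 E1 E1) i0 h; cn h.
  + by move=> x y; apply: row2_eq; rewrite !mxE /=; ring.
  + exists (vec2 2 0) => x; apply: row2_eq; rewrite !mxE /= ?h2; ring.
Qed.
End Facts.


Section VB.
Variable F : fieldType.
Variable V : vectType F.
Lemma vect_basis_aux n (X : n.-tuple V) : n = 2%N -> free X -> (forall v, v \in <<X>>%VS) ->
  exists (u w : V) (c1 c2 : V -> F), (forall v, v = c1 v *: u + c2 v *: w) /\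
     (forall a b, a *: u + b *: w = 0 -> a = 0 /\ b = 0).
Proof.
move=> hn; subst n => fX sX.
exists X`_0, X`_1, (fun v => coord X ord0 v), (fun v => coord X (lift ord0 ord0) v); split.
- move=> v; rewrite {1}(coord_span (sX v)).
  by rewrite big_ord_recl big_ord_recl big_ord0 addr0.
- move=> a b hab.
  have := (freeP fX) (fun i : 'I_2 => if i == ord0 then a else b).
  rewrite big_ord_recl big_ord_recl big_ord0 addr0 /= => h.
  by split; [apply: (h hab ord0) | apply: (h hab (lift ord0 ord0))].
Qed.

Lemma vect_basis : \dim (fullv : {vspace V}) = 2%N ->
  exists (u w : V) (c1 c2 : V -> F), (forall v, v = c1 v *: u + c2 v *: w) /\
     (forall a b, a *: u + b *: w = 0 -> a = 0 /\ b = 0).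
Proof.
move=> hd; apply: (vect_basis_aux hd (basis_free (vbasisP fullv))).
by move=> v; rewrite (span_basis (vbasisP fullv)) memvf.
Qed.
End VB.

Theorem mainTheorem6 (F : fieldType) (hF : (3 \in [pchar F])%N) :
  (forall (V : vectType F), \dim (fullv : {vspace V}) = 2%N ->
     forall dl dr : V -> V -> V,
       is_bilinear dl -> is_bilinear dr -> diassociative dl dr ->
       (exists x y : V, dl x y != 0) ->
       exists (i : item) (p : F),
         dialg_iso dl dr (item_dl i p) (item_dr i p))
  /\
  (forall (i j : item) (p q : F), i <> j ->
     ~ dialg_iso (item_dl i p) (item_dr i p) (item_dl j q) (item_dr j q)).
Proof.
split.
- move=> V hd dl dr hl hr H nz.
  have [u [w [c1 [c2 [sp ind]]]]] := vect_basis hd.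
  have I0 := basis_iso sp ind hl hr (ctabP sp dl) (ctabP sp dr).
  have HS := iso_diassoc I0 H.
  have nz' := iso_nz I0 nz.
  move: HS nz' I0.
  move: (ctab u w c1 c2 dl) (ctab u w c1 c2 dr) => A B HS nz' I0.
  rewrite (mx24_eta A) in HS nz' I0.
  have [i [p Ip]] := stage1 hF nz' HS.
  by exists i, p; apply: iso_sym (iso_trans Ip I0).
- move=> i j p q hij I.
  have [a1 a2 a3 a4 a5] := Piff I.
  have fi := facts hF i p; have fj := facts hF j q.
  clear I; move: hij a1 a2 a3 a4 a5 fi fj.
  by case: i; case: j => //= _; rewrite /Fact /=; tauto.
Qed.
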